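(* With the construction below, for every $n\ge n_0$ and every $y\in M$ with $0<d(\bar x,y)<\dfrac{\rho_n}{n(n+1)}$, we have $\overline d(x_n,y)>\rho_n$.
   Context: Let $(M,d)$ be a metric space, $\bar x\in M$, and $(x_n)_{n\ge1}$ a sequence of distinct points of $M\setminus\{\bar x\}$ with $d(x_n,\bar x)\to0$. Set $\rho_n=\frac{n}{n+1}d(x_n,\bar x)$ and assume $(\rho_n)_{n\ge1}$ is strictly decreasing. Fix $0<c<1$ and an integer $n_0\ge1$ with $c(n_0+1)<n_0$. Define $\theta(x,y)=\rho_n$ if $\{x,y\}=\{x_n,\bar x\}$ for some $n\ge n_0$, and $\theta(x,y)=d(x,y)$ otherwise. Define $\overline d(x,y)=\inf\sum_{i=0}^{N-1}\theta(a_i,a_{i+1})$, the infimum over all $N\ge1$ and all chains $a_0=x,a_1,\dots,a_N=y$ in $M$. *)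

(* Defs.v *)
From Stdlib Require Import Reals Lra List Classical ClassicalEpsilon.
Open Scope R_scope.

Definition is_metric {M : Type} (d : M -> M -> R) : Prop :=
  (forall x y, 0 <= d x y) /\
  (forall x y, d x y = 0 <-> x = y) /\
  (forall x y, d x y = d y x) /\
  (forall x y z, d x z <= d x y + d y z).

Definition rho {M : Type} (d : M -> M -> R) (xs : nat -> M) (xb : M) (n : nat) : R :=
  INR n / INR (n + 1) * d (xs n) xb.

Definition is_special_pair {M : Type} (xs : nat -> M) (xb : M) (n0 : nat)
  (x y : M) (n : nat) : Prop :=
  (n0 <= n)%nat /\ ((x = xs n /\ y = xb) \/ (x = xb /\ y = xs n)).

(* theta(x,y) = rho_n if {x,y} = {x_n, xbar} for some n >= n0, else d(x,y).
   (Such n is unique since the x_n are distinct.) *)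
Definition theta {M : Type} (d : M -> M -> R) (xs : nat -> M) (xb : M) (n0 : nat)
  (x y : M) : R :=
  match excluded_middle_informative
          (exists n, is_special_pair xs xb n0 x y n) with
  | left H => rho d xs xb (proj1_sig (constructive_indefinite_description _ H))
  | right _ => d x y
  end.

(* Sum of theta along the chain x = a_0, a_1, ..., a_N where l = [a_1; ...; a_N]. *)
Fixpoint chain_sum {M : Type} (t : M -> M -> R) (x : M) (l : list M) : R :=
  match l with
  | nil => 0
  | a :: l' => t x a + chain_sum t a l'
  end.

Definition chain_sums {M : Type} (t : M -> M -> R) (x y : M) : R -> Prop :=
  fun s => exists l : list M, l <> nil /\ last l x = y /\ s = chain_sum t x l.

Definition is_inf (S : R -> Prop) (r : R) : Prop :=
  (forall s, S s -> r <= s) /\ (forall b, (forall s, S s -> b <= s) -> b <= r).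

(* dbar(x,y) = inf of chain sums (the infimum exists: nonempty, bounded below by 0). *)
Definition dbar {M : Type} (d : M -> M -> R) (xs : nat -> M) (xb : M) (n0 : nat)
  (x y : M) : R :=
  epsilon (inhabits 0) (fun r => is_inf (chain_sums (theta d xs xb n0) x y) r).

(* Main.v *)
Require Import Defs.
From Stdlib Require Import Reals Lra List Classical ClassicalEpsilon Lia.
Open Scope R_scope.

Lemma last_cons_aux {M : Type} (a x : M) (l : list M) : last (a :: l) x = last l a.
Proof.
  revert a x. induction l as [|b l IH]; intros a x; [reflexivity|].
  change (last (b :: l) x = last (b :: l) a).
  rewrite IH. symmetry. apply IH.
Qed.

Lemma chain_lb {M : Type} (t : M -> M -> R) (h : M -> R)
  (Ht : forall a b, h a - h b <= t a b) :
  forall l x, chain_sum t x l >= h x - h (last l x).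
Proof.
  induction l as [|a l IH]; intros x; simpl chain_sum.
  - simpl. lra.
  - rewrite last_cons_aux. specialize (IH a). specialize (Ht x a). lra.
Qed.

Lemma Rdiv_le_0_compat (a b : R) : 0 <= a -> 0 < b -> 0 <= a / b.
Proof. intros. unfold Rdiv. apply Rmult_le_pos; [lra|]. left; apply Rinv_0_lt_compat; lra. Qed.

Lemma frac_mono (a b : R) : 0 <= a <= b -> a / (a + 1) <= b / (b + 1).
Proof.
  intros H.
  assert (Ea : a / (a + 1) = 1 - / (a + 1)) by (field; lra).
  assert (Eb : b / (b + 1) = 1 - / (b + 1)) by (field; lra).
  rewrite Ea, Eb. apply Rplus_le_compat_l, Ropp_le_contravar, Rinv_le_contravar; lra.
Qed.

Lemma rho_eq {M : Type} (d : M -> M -> R) xs xb m :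
  rho d xs xb m = INR m / (INR m + 1) * d (xs m) xb.
Proof. unfold rho. rewrite plus_INR. reflexivity. Qed.

Lemma rho_dec_far {M : Type} (d : M -> M -> R) xs xb
  (Hdec : forall n, (1 <= n)%nat -> rho d xs xb (S n) < rho d xs xb n) :
  forall j m, (1 <= m)%nat -> rho d xs xb (m + S j) < rho d xs xb m.
Proof.
  induction j as [|j IH]; intros m Hm.
  - replace (m + 1)%nat with (S m) by lia. apply Hdec; lia.
  - replace (m + S (S j))%nat with (S (m + S j)) by lia.
    specialize (IH m Hm). specialize (Hdec (m + S j)%nat ltac:(lia)). lra.
Qed.

Theorem lemma7p3 (M : Type) (d : M -> M -> R) (xb : M) (xs : nat -> M)
  (c : R) (n0 : nat)
  (Hmetric : is_metric d)
  (Hdistinct : forall m n, (1 <= m)%nat -> (1 <= n)%nat -> m <> n -> xs m <> xs n)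
  (Hneq : forall n, (1 <= n)%nat -> xs n <> xb)
  (Hconv : Un_cv (fun n => d (xs n) xb) 0)
  (Hdec : forall n, (1 <= n)%nat -> rho d xs xb (S n) < rho d xs xb n)
  (Hc : 0 < c < 1)
  (Hn0 : (1 <= n0)%nat)
  (Hcn0 : c * (INR n0 + 1) < INR n0) :
  forall n : nat, (n0 <= n)%nat ->
  forall y : M,
    0 < d xb y < rho d xs xb n / (INR n * (INR n + 1)) ->
    dbar d xs xb n0 (xs n) y > rho d xs xb n.
Proof.
  intros n Hn y Hy.
  destruct Hmetric as [Hpos [Hzero [Hsym Htri]]].
  assert (Hd0 : forall z, d z z = 0) by (intros; apply Hzero; reflexivity).
  set (dy := d xb y) in *.
  set (k := INR n / (INR n + 1)).
  set (rn := rho d xs xb n) in *.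
  assert (Han : 1 <= INR n) by (pose proof (le_INR 1 n ltac:(lia)) as H; simpl in H; lra).
  assert (Hk : 0 <= k <= 1).
  { unfold k. split. apply Rdiv_le_0_compat; lra.
    assert (E : INR n / (INR n + 1) = 1 - / (INR n + 1)) by (field; lra).
    rewrite E. assert (0 < / (INR n + 1)) by (apply Rinv_0_lt_compat; lra). lra. }
  assert (Hrn : rn = k * d (xs n) xb) by (unfold rn, k; apply rho_eq).
  assert (Hrn0 : 0 <= rn) by (rewrite Hrn; apply Rmult_le_pos; [lra| apply Hpos]).
  assert (Hc0 : c < INR n0 / (INR n0 + 1)).
  { assert (Hpn0 : 0 < INR n0 + 1) by (pose proof (pos_INR n0); lra).
    assert (E : INR n0 / (INR n0+1) - c = (INR n0 - c*(INR n0+1)) / (INR n0 + 1))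
      by (field; lra).
    assert (0 < (INR n0 - c*(INR n0+1)) / (INR n0 + 1))
      by (apply Rdiv_lt_0_compat; lra). lra. }
  assert (F1 : forall m, (n0 <= m)%nat -> c * d (xs m) xb <= rho d xs xb m).
  { intros m Hm. rewrite rho_eq. apply Rmult_le_compat_r; [apply Hpos|].
    pose proof (frac_mono (INR n0) (INR m)) as Hf.
    assert (INR n0 <= INR m) by (apply le_INR; lia).
    pose proof (pos_INR n0). specialize (Hf ltac:(lra)). lra. }
  assert (F2 : forall m, (n0 <= m)%nat -> Rmin (k * d (xs m) xb) rn <= rho d xs xb m).
  { intros m Hm. destruct (Compare_dec.le_lt_dec n m) as [Hnm|Hmn].
    - eapply Rle_trans; [apply Rmin_l|]. rewrite rho_eq. unfold k.
      apply Rmult_le_compat_r; [apply Hpos|].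
      apply frac_mono. split; [lra|]. apply le_INR; lia.
    - eapply Rle_trans; [apply Rmin_r|]. unfold rn.
      replace n with (m + S (n - m - 1))%nat by lia.
      left. apply rho_dec_far; auto. lia. }
  set (h := fun z => Rmin (d z y) (c * dy + Rmin (k * d z xb) rn)).
  assert (Hcases : forall z, h z = d z y \/ h z = c*dy + k * d z xb \/ h z = c*dy + rn).
  { intros z. unfold h, Rmin. destruct (Rle_dec _ _); [auto|].
    destruct (Rle_dec _ _); auto. }
  assert (Hub : forall z, h z <= d z y /\ h z <= c*dy + k * d z xb /\ h z <= c*dy + rn).
  { intros z. unfold h. pose proof (Rmin_l (d z y) (c * dy + Rmin (k * d z xb) rn)).
    pose proof (Rmin_r (d z y) (c * dy + Rmin (k * d z xb) rn)).
    pose proof (Rmin_l (k * d z xb) rn). pose proof (Rmin_r (k * d z xb) rn). lra. }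
  assert (Hlipd : forall a b, h a - h b <= d a b).
  { intros a b. pose proof (Htri a b y). pose proof (Htri a b xb).
    pose proof (Hpos a b).
    assert (k * d a xb <= k * d a b + k * d b xb) by nra.
    assert (k * d a b <= d a b) by (pose proof (Hpos a b); nra).
    destruct (Hub a) as [? [? ?]].
    destruct (Hcases b) as [E|[E|E]]; rewrite E; lra. }
  assert (Hhxb : h xb = c * dy).
  { unfold h. rewrite Hd0, Rmult_0_r.
    rewrite (Rmin_left 0 rn) by lra. rewrite Rplus_0_r.
    apply Rmin_right. fold dy. nra. }
  assert (Hspec : forall m, (n0 <= m)%nat ->
            h (xs m) - h xb <= rho d xs xb m /\ h xb - h (xs m) <= rho d xs xb m).
  { intros m Hm. rewrite Hhxb. split.
    - unfold h. eapply Rle_trans. apply Rplus_le_compat_r, Rmin_r.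
      specialize (F2 m Hm). lra.
    - specialize (F1 m Hm). pose proof (Htri xb (xs m) y). rewrite (Hsym xb (xs m)) in H.
      fold dy in H. pose proof (Hpos (xs m) y). pose proof (Hpos (xs m) xb).
      assert (c * d (xs m) y <= d (xs m) y) by nra.
      assert (0 <= k * d (xs m) xb) by nra.
      destruct (Hcases (xs m)) as [E|[E|E]]; rewrite E; nra. }
  assert (Hlip : forall a b, h a - h b <= theta d xs xb n0 a b).
  { intros a b. unfold theta.
    destruct (excluded_middle_informative _) as [H|H].
    - destruct (constructive_indefinite_description _ H) as [m [Hm [[-> ->]|[-> ->]]]];
        simpl; apply Hspec in Hm; lra.
    - apply Hlipd. }
  assert (Hhy : h y = 0).
  { unfold h. rewrite Hd0. apply Rmin_left.
    pose proof (Rmin_glb (k * d y xb) rn 0 ltac:(apply Rmult_le_pos; [lra|apply Hpos]) Hrn0).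
    nra. }
  assert (Hhxn : h (xs n) > rn).
  { set (dn := d (xs n) xb) in *.
    assert (Hdist : d (xs n) y >= dn - dy).
    { pose proof (Htri (xs n) y xb). rewrite (Hsym y xb) in H. fold dy in H. fold dn in H. lra. }
    assert (Hgap : dy < dn / (INR n + 1)).
    { destruct Hy as [_ Hy]. rewrite Hrn in Hy. unfold k in Hy.
      assert (E : INR n / (INR n + 1) * dn / (INR n * (INR n + 1))
                  = (dn / (INR n + 1)) * / (INR n + 1)) by (field; lra).
      rewrite E in Hy.
      assert (0 < / (INR n + 1) <= 1).
      { split. apply Rinv_0_lt_compat; lra.
        rewrite <- Rinv_1. apply Rinv_le_contravar; lra. }
      assert (0 <= dn / (INR n + 1)).
      { apply Rdiv_le_0_compat; [apply Hpos|lra]. }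
      nra. }
    assert (E2 : k * dn = dn - dn / (INR n + 1)) by (unfold k; field; lra).
    destruct (Hcases (xs n)) as [E|[E|E]]; rewrite E; fold dn; nra. }
  set (T := theta d xs xb n0).
  assert (Hlow : forall s, chain_sums T (xs n) y s -> h (xs n) <= s).
  { intros s [l [_ [Hl ->]]]. pose proof (chain_lb T h Hlip l (xs n)) as Hc'.
    rewrite Hl, Hhy in Hc'. lra. }
  assert (Hex : exists r, is_inf (chain_sums T (xs n) y) r).
  { set (E := fun u => chain_sums T (xs n) y (- u)).
    assert (Hb : bound E).
    { exists (- h (xs n)). intros u Hu. apply Hlow in Hu. lra. }
    assert (Hne : exists u, E u).
    { exists (- (T (xs n) y + 0)). unfold E. rewrite Ropp_involutive.
      exists (y :: nil). split; [discriminate|]. split; reflexivity. }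
    destruct (completeness E Hb Hne) as [m [Hm1 Hm2]].
    exists (- m). split.
    - intros s Hs. assert (E (- s)) by (unfold E; rewrite Ropp_involutive; exact Hs).
      apply Hm1 in H. lra.
    - intros b Hbd. assert (m <= - b).
      { apply Hm2. intros u Hu. apply Hbd in Hu. lra. }
      lra. }
  unfold dbar. fold T.
  pose proof (epsilon_spec (inhabits 0) _ Hex) as [_ Hglb].
  specialize (Hglb (h (xs n)) Hlow). unfold Rgt. eapply Rlt_le_trans; [exact Hhxn|exact Hglb].
Qed.
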